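(* Let $G^\sigma$ be a connected oriented unicyclic graph and $C^\sigma$ its unique cycle. (1) If there exists a vertex $v\in V(C^\sigma)$ which is saturated in $G^\sigma\{v\}$, then $sr(G^\sigma)=sr(G^\sigma\{v\})+sr(G^\sigma-G^\sigma\{v\})$. (2) If no vertex $v\in V(C^\sigma)$ is saturated in $G^\sigma\{v\}$, then $sr(G^\sigma)=sr(C^\sigma)+sr(G^\sigma-C^\sigma)$.
   Context: An oriented graph $G^\sigma$ is a simple graph $G$ together with an orientation of each edge. Its skew-adjacency matrix $S(G^\sigma)=(s_{ij})$ has $s_{ij}=1$ if there is an arc from $v_i$ to $v_j$, $s_{ij}=-1$ if there is an arc from $v_j$ to $v_i$, and $0$ otherwise; the skew-rank $sr(\cdot)$ is the rank of the skew-adjacency matrix (of the induced oriented subgraph in question). For a vertex $v$ on the cycle, $G^\sigma\{v\}$ denotes the oriented tree rooted at $v$ containing $v$, i.e. the component containing $v$ of the graph obtained from $G^\sigma$ by deleting the edges of the cycle. A vertex $v$ of a tree $T$ is saturated in $T$ if every maximum matching of $T$ contains an edge incident with $v$, and unsaturated otherwise. $G^\sigma-H^\sigma$ denotes deletion of the vertices of $H^\sigma$ together with incident edges. *)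

(* Defs.v *)
From mathcomp Require Import all_boot all_order all_algebra.
Set Implicit Arguments. Unset Strict Implicit. Unset Printing Implicit Defensive.
Import GRing.Theory Num.Theory.
Local Open Scope ring_scope.

Section OrientedGraphs.
Variable T : finType.

Definition oriented (a : rel T) : Prop :=
  (forall x, ~~ a x x) /\ (forall x y, a x y -> ~~ a y x).

Definition und (a : rel T) : rel T := fun x y => a x y || a y x.

Definition skew (a : rel T) (x y : T) : rat :=
  if a x y then 1 else if a y x then -1 else 0.

Definition skew_mx (a : rel T) (S : {set T}) : 'M[rat]_(#|S|) :=
  \matrix_(i < #|S|, j < #|S|) skew a (enum_val i) (enum_val j).

Definition sr (a : rel T) (S : {set T}) : nat := \rank (skew_mx a S).

Definition connected_graph (a : rel T) : Prop :=
  forall x y, connect (und a) x y.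

Definition n_edges (a : rel T) : nat := #|[set p : T * T | a p.1 p.2]|.

Definition is_graph_cycle (a : rel T) (c : seq T) : Prop :=
  [/\ uniq c, 3 <= size c & cycle (und a) c]%N.

Definition cycle_verts (c : seq T) : {set T} := [set x | x \in c].

Definition cycle_edge (c : seq T) : rel T := fun x y =>
  [&& x \in c, y \in c & (next c x == y) || (next c y == x)].

Definition del_cycle_edges (a : rel T) (c : seq T) : rel T :=
  fun x y => und a x y && ~~ cycle_edge c x y.

(* G{v}: vertex set of the component containing v after deleting cycle edges *)
Definition rooted_tree (a : rel T) (c : seq T) (v : T) : {set T} :=
  [set u | connect (del_cycle_edges a c) v u].

Definition is_matching (r : rel T) (K : {set T}) (M : {set T * T}) : Prop :=
  (forall p, p \in M -> [/\ p.1 \in K, p.2 \in K & r p.1 p.2]) /\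
  (forall p q, p \in M -> q \in M -> p != q ->
     [disjoint [set p.1; p.2] & [set q.1; q.2]]).

Definition is_max_matching (r : rel T) (K : {set T}) (M : {set T * T}) : Prop :=
  is_matching r K M /\ (forall M', is_matching r K M' -> (#|M'| <= #|M|)%N).

Definition saturated (r : rel T) (K : {set T}) (v : T) : Prop :=
  forall M, is_max_matching r K M -> exists2 p, p \in M & (v == p.1) || (v == p.2).

End OrientedGraphs.

(* Main.v *)
Require Import Defs.
From mathcomp Require Import all_boot all_order all_algebra.
From mathcomp Require Import ring lra zify.

Module MPA.
Set Implicit Arguments. Unset Strict Implicit. Unset Printing Implicit Defensive.

Lemma disjW (X : finType) (A B : {set X}) x :
  [disjoint A & B] -> x \in A -> x \in B -> False.
Proof. by move=> d xA xB; rewrite (disjointFr d xA) in xB. Qed.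

Lemma disjI (X : finType) (A B : {set X}) :
  (forall x, x \in A -> x \in B -> False) -> [disjoint A & B].
Proof.
move=> h; rewrite -setI_eq0; apply/eqP/setP => x; rewrite !inE.
by apply/negbTE/negP => /andP[xA xB]; exact: h xA xB.
Qed.

Section Matching.
Variable T : finType.
Variable r : rel T.
Hypothesis rsym : symmetric r.

Definition mb (K : {set T}) (M : {set T * T}) : bool :=
  [forall p in M, [&& p.1 \in K, p.2 \in K & r p.1 p.2]] &&
  [forall p in M, forall q in M, (p != q) ==> [disjoint [set p.1; p.2] & [set q.1; q.2]]].

Lemma mbP K M : reflect (is_matching r K M) (mb K M).
Proof.
apply: (iffP andP) => [[/forallP H1 /forallP H2]|[H1 H2]]; split.
- move=> p pM; have := H1 p; rewrite pM /= => /and3P[]; done.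
- move=> p q pM qM pq; have := H2 p; rewrite pM /= => /forallP /(_ q).
  by rewrite qM pq.
- apply/forallP=> p; apply/implyP=> pM; have [-> -> ->] := H1 p pM; done.
- apply/forallP=> p; apply/implyP=> pM; apply/forallP=> q; apply/implyP=> qM.
  apply/implyP=> pq; exact: H2.
Qed.

Definition nu K := \max_(M : {set T*T} | mb K M) #|M|.

Lemma mb0 K : mb K set0.
Proof. by apply/mbP; split=> [p|p q]; rewrite inE. Qed.

Lemma nu_ge K M : mb K M -> #|M| <= nu K.
Proof. by move=> h; apply: (leq_bigmax_cond M). Qed.

Lemma nu_ex K : exists2 M, mb K M & #|M| = nu K.
Proof.
have h : (0 < #|[pred M | mb K M]|)%N.
  by apply/card_gt0P; exists set0; rewrite inE mb0.
have [M0 HM0 E] := eq_bigmax_cond (fun M : {set T*T} => #|M|) h.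
by exists M0; [rewrite inE in HM0|rewrite /nu -E].
Qed.

Lemma mb_sub (K K' : {set T}) M : K \subset K' -> mb K M -> mb K' M.
Proof.
move=> sKK /mbP[H1 H2]; apply/mbP; split=> // p pM.
by have [h1 h2 h3] := H1 p pM; split=> //; apply: (subsetP sKK).
Qed.

Lemma nu_sub (K K' : {set T}) : K \subset K' -> nu K <= nu K'.
Proof. by move=> s; have [M hM <-] := nu_ex K; apply: nu_ge; apply: mb_sub hM. Qed.

Lemma nu_del (K : {set T}) v : nu K <= (nu (K :\ v)).+1.
Proof.
have [M hM <-] := nu_ex K.
set B := [set p : T * T | (p.1 != v) && (p.2 != v)].
have h1 : mb (K :\ v) (M :&: B).
  move/mbP: hM => [H1 H2]; apply/mbP; split.
  - move=> p; rewrite !inE => /andP[pM /andP[p1 p2]].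
    have [h1 h2 h3] := H1 p pM; by rewrite ?inE p1 p2 h1 h2 h3.
  - move=> p q; rewrite !inE => /andP[pM _] /andP[qM _]; exact: H2.
have h2 : #|M :\: B| <= 1.
  apply/card_le1_eqP => p q; rewrite !inE => /andP[pB pM] /andP[qB qM].
  apply/eqP; apply/negPn/negP => pq.
  move/mbP: hM => [_ H2]; have := H2 p q pM qM; rewrite eq_sym pq => /(_ isT).
  move/disjW => /(_ v); apply; rewrite !inE.
    by move: pB; rewrite negb_and !negbK ![v == _]eq_sym.
  by move: qB; rewrite negb_and !negbK ![v == _]eq_sym.
rewrite -(cardsID B M) -addn1 leq_add //; exact: nu_ge.
Qed.

Lemma nu_isol (K : {set T}) x : (forall y, y \in K -> ~~ r x y) -> nu K <= nu (K :\ x).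
Proof.
move=> hx; have [M hM <-] := nu_ex K; apply: nu_ge.
move/mbP: hM => [H1 H2]; apply/mbP; split=> // p pM.
have [h1 h2 h3] := H1 p pM; rewrite !inE h1 h2; split=> //.
- by apply/andP; split=> //; apply: contraTneq h3 => ->; apply: hx.
- by apply/andP; split=> //; apply: contraTneq h3 => ->; rewrite rsym; apply: hx.
Qed.

Lemma nu_edge (K : {set T}) x y : x \in K -> y \in K -> r x y -> x != y ->
  (nu (K :\ x :\ y)).+1 <= nu K.
Proof.
move=> xK yK rxy nxy; have [M hM <-] := nu_ex (K :\ x :\ y).
have xM : (x, y) \notin M.
  apply/negP=> xyM; move/mbP: hM => [H1 _]; have [h1 _ _] := H1 _ xyM.
  by move: h1; rewrite !inE /= eqxx andbF.
have e := cardsU1 (x, y) M; rewrite xM add1n in e; rewrite -e; apply: nu_ge.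
move/mbP: hM => [H1 H2]; apply/mbP; split.
- move=> p; rewrite !inE => /orP[/eqP->//|pM].
  have [h1 h2 h3] := H1 p pM; move: h1 h2; rewrite !inE.
  by case/and3P=> _ _ -> /and3P[_ _ ->].
- move=> p q; rewrite !inE => /orP[/eqP->|pM] /orP[/eqP->|qM]; first by rewrite eqxx.
  + move=> _; have [h1 h2 _] := H1 q qM; move: h1 h2; rewrite !inE.
    move=> /and3P[q1y q1x _] /and3P[q2y q2x _].
    apply/disjI => z; rewrite !inE /= => /orP[]/eqP-> /orP[]/eqP E;
      by move: q1y q1x q2y q2x; rewrite E eqxx.
  + move=> _; have [h1 h2 _] := H1 p pM; move: h1 h2; rewrite !inE.
    move=> /and3P[q1y q1x _] /and3P[q2y q2x _].
    apply/disjI => z; rewrite !inE /= => /orP[]/eqP-> /orP[]/eqP E;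
      by move: q1y q1x q2y q2x; rewrite ?E eqxx.
  + exact: H2.
Qed.

Lemma sat_nu (K : {set T}) v : v \in K -> saturated r K v <-> nu (K :\ v) < nu K.
Proof.
move=> vK; split.
- move=> hs; rewrite ltnNge; apply/negP => hle.
  have [M hM eM] := nu_ex (K :\ v).
  have [|p pM /orP hp] := hs M.
    split; first by apply/mbP; apply: mb_sub hM; apply: subsetDl.
    move=> M' /mbP hM'; rewrite eM; apply: leq_trans hle; exact: nu_ge.
  move/mbP: hM => [H1 _]; have [h1 h2 _] := H1 p pM; move: h1 h2; rewrite !inE.
  by case: hp => /eqP <-; rewrite eqxx.
- move=> hlt M [hM hmax].
  case: (boolP [exists p in M, (v == p.1) || (v == p.2)]).
    by move=> /existsP[p /andP[pM hp]]; exists p.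
  rewrite negb_exists => /forallP hn; exfalso.
  have [M0 hM0 eM0] := nu_ex K.
  have : nu K <= #|M| by rewrite -eM0; apply: hmax; apply/mbP.
  apply/negP; rewrite -ltnNge; apply: leq_ltn_trans hlt; apply: nu_ge.
  case: hM => H1 H2; apply/mbP; split=> // p pM.
  have [h1 h2 h3] := H1 p pM; have := hn p; rewrite pM /= negb_or.
  by case/andP=> a1 a2; rewrite !inE h1 h2 eq_sym a1 eq_sym a2.
Qed.

End Matching.

Lemma matching_eq (T : finType) (r1 r2 : rel T) (K : {set T}) M :
  {in K &, forall x y, r1 x y = r2 x y} -> is_matching r1 K M <-> is_matching r2 K M.
Proof.
move=> e; split=> -[H1 H2]; split=> // p pM; have [h1 h2 h3] := H1 p pM; split=> //.
  by rewrite -e. by rewrite e.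
Qed.

Lemma saturated_eq (T : finType) (r1 r2 : rel T) (K : {set T}) v :
  {in K &, forall x y, r1 x y = r2 x y} -> saturated r1 K v <-> saturated r2 K v.
Proof.
move=> e; split=> h M [hM hmax].
- apply: h; split; first by apply/(matching_eq _ e).
  by move=> M' /(matching_eq _ e); apply: hmax.
- apply: h; split; first by apply/(matching_eq _ e).
  by move=> M' /(matching_eq _ e); apply: hmax.
Qed.

End MPA.
Import MPA.

Module MPB.
Set Implicit Arguments. Unset Strict Implicit. Unset Printing Implicit Defensive.
Import GRing.Theory Num.Theory.
Local Open Scope ring_scope.

Section Tree.
Variable T : finType.
Variable a : rel T.
Hypothesis ao : oriented a.

Local Notation G := (und a).
Local Notation sk := (Defs.skew a).

Lemma Gsym : symmetric G.
Proof. by move=> x y; rewrite /und orbC. Qed.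

Lemma Girr x : ~~ G x x.
Proof. by rewrite /und orbb; case: ao. Qed.

Lemma skewN x y : sk y x = - sk x y.
Proof.
rewrite /Defs.skew; case: ao => _ h.
case axy: (a x y); first by have := h _ _ axy; move/negbTE => ->.
by case: (a y x) => //; rewrite oppr0.
Qed.

Lemma skew0 x y : ~~ G x y -> sk x y = 0.
Proof. by rewrite /und /Defs.skew negb_or => /andP[/negbTE-> /negbTE->]. Qed.

Lemma skew_xx x : sk x x = 0.
Proof. exact/skew0/Girr. Qed.

Lemma skew_nz x y : G x y -> sk x y != 0.
Proof. by rewrite /und /Defs.skew; case: (a x y) => //= ->. Qed.

Lemma dsum0 (K : {set T}) (f : T -> rat) :
  \sum_(k in K) \sum_(l in K) f k * (sk k l * f l) = 0.
Proof.
set S := \sum_(k in K) _.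
have : S = - S.
  rewrite {1}/S exchange_big /= -sumrN; apply: eq_bigr => l _.
  rewrite -sumrN; apply: eq_bigr => k _; rewrite skewN; ring.
move=> h; lra.
Qed.

Definition FP (K : {set T}) := forall S : {set T}, S \subset K -> S != set0 ->
  exists2 x, x \in S & (#|[set y in S | G x y]| <= 1)%N.

Definition PP (K : {set T}) v := exists f : T -> rat,
  forall u, u \in K -> \sum_(w in K) sk u w * f w = (u == v)%:R.

Definition QQ (K : {set T}) v := exists g : T -> rat,
  forall u, u \in K :\ v -> \sum_(w in K :\ v) sk u w * g w = sk u v.

Local Notation nuG := (nu G).

Lemma FP_sub (K K' : {set T}) : K' \subset K -> FP K -> FP K'.
Proof. by move=> s1 h S sS; apply: h; apply: subset_trans s1. Qed.

Lemma split1 (K : {set T}) x (F : T -> rat) : x \in K ->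
  \sum_(w in K) F w = F x + \sum_(w in K :\ x) F w.
Proof. by move=> xK; rewrite (big_setD1 x xK). Qed.

Lemma DC (K : {set T}) x y : K :\ x :\ y = K :\ y :\ x.
Proof. by apply/setP => z; rewrite !inE andbCA. Qed.

Lemma tree_PQ n (K : {set T}) : (#|K| <= n)%N -> FP K -> forall v, v \in K ->
  (nuG (K :\ v) < nuG K -> PP K v)%N /\ (nuG K <= nuG (K :\ v) -> QQ K v)%N.
Proof.
elim: n K => [|n IH] K.
  by rewrite leqn0 cards_eq0 => /eqP-> _ v; rewrite inE.
move=> hK fK v vK.
have Kn0 : K != set0 by apply/set0Pn; exists v.
have [x xK hx] := fK K (subxx _) Kn0.

have sizeD1 : forall z, z \in K -> (#|K :\ z| <= n)%N.
  by move=> z zK; move: hK; rewrite (cardsD1 z K) zK add1n ltnS.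
case: (posnP #|[set y in K | G x y]|) => [h0|hpos].
  have iso : forall y, y \in K -> ~~ G x y.
    move=> y yK; apply/negP => gxy; move/eqP: h0; rewrite cards_eq0.
    by move/eqP/setP/(_ y); rewrite !inE yK gxy.
  have sx0 : forall u, u \in K -> sk u x = 0.
    by move=> u uK; apply: skew0; rewrite Gsym iso.
  have sx0' : forall u, u \in K -> sk x u = 0.
    by move=> u uK; apply: skew0; rewrite iso.
  have nuKx : nuG K = nuG (K :\ x).
    by apply/eqP; rewrite eqn_leq (nu_isol Gsym) // nu_sub // subsetDl.
  case: (eqVneq v x) => [evx|nvx].
    subst v; split; first by rewrite nuKx ltnn.
    move=> _; exists (fun _ => 0) => u uKx.
    rewrite big1 => [|w _]; last by rewrite mulr0.
    by rewrite sx0 //; case/setD1P: uKx.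
  have vK' : v \in K :\ x by rewrite !inE nvx vK.
  have [IH1 IH2] := IH (K :\ x) (sizeD1 x xK) (FP_sub (subsetDl K [set x]) fK) v vK'.
  have e1 : nuG (K :\ v) = nuG (K :\ x :\ v).
    apply/eqP; rewrite eqn_leq -DC (nu_isol Gsym) ?nu_sub ?subsetDl //.
    by move=> y; rewrite !inE => /andP[_ yK]; exact: iso.
  split.
    move=> hlt; rewrite e1 nuKx in hlt; have [f hf] := IH1 hlt.
    exists f => u uK; rewrite (split1 _ xK) sx0 // mul0r add0r.
    case: (eqVneq u x) => [->|nux]; last by apply: hf; rewrite !inE nux.
    rewrite big1 => [|w wK]; first by rewrite eq_sym (negbTE nvx).
    by rewrite sx0' ?mul0r //; case/setD1P: wK.
  move=> hge; rewrite e1 nuKx in hge; have [g hg] := IH2 hge.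
  have xKv : x \in K :\ v by rewrite !inE eq_sym nvx xK.
  exists g => u uKv; have uK : u \in K by case/setD1P: uKv.
  rewrite (split1 _ xKv) sx0 // mul0r add0r -DC.
  case: (eqVneq u x) => [->|nux]; last by apply: hg; rewrite !inE nux -in_setD1.
  rewrite big1 => [|w wK]; first by rewrite sx0'.
  by rewrite sx0' ?mul0r //; case/setD1P: wK => _; case/setD1P.
have hone : #|[set y in K | G x y]| == 1%N by rewrite eqn_leq hx hpos.
have /cards1P [y Ny] := hone.
have yN : y \in [set y in K | G x y] by rewrite Ny set11.
rewrite inE in yN; case/andP: yN => yK Gxy.
have uniqN : forall z, z \in K -> G x z -> z = y.
  by move=> z zK gz; apply/set1P; rewrite -Ny inE zK gz.
have xy : x != y by apply: contraTneq Gxy => ->; rewrite Girr.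
have yx : y != x by rewrite eq_sym.
have sx0 : forall u, u \in K -> u != y -> sk u x = 0.
  move=> u uK uy; apply: skew0; rewrite Gsym; apply: contra uy => g.
  by rewrite (uniqN _ uK g).
have sx0' : forall u, u \in K -> u != y -> sk x u = 0.
  by move=> u uK uy; rewrite skewN sx0 // oppr0.
have yKx : y \in K :\ x by rewrite !inE eq_sym xy yK.
have leaf : forall K0 : {set T}, x \in K0 -> y \in K0 -> K0 \subset K ->
    nuG K0 = (nuG (K0 :\ x :\ y)).+1.
  move=> K0 xK0 yK0 sK0; apply/eqP; rewrite eqn_leq nu_edge // andbT.
  apply: leq_trans (@nu_del _ G K0 y) _; rewrite ltnS DC (nu_isol Gsym) //.
  move=> z; rewrite !inE => /andP[zy zK0]; apply/negP => g.
  by move: zy; rewrite (uniqN _ (subsetP sK0 _ zK0) g) eqxx.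
have nuK := leaf K xK yK (subxx _).
have syx : sk y x != 0 by rewrite skew_nz // Gsym.
have sxy : sk x y != 0 by rewrite skew_nz.
case: (eqVneq v y) => [evy|nvy].
  subst v; split.
    move=> _; exists (fun w => if w == x then (sk y x)^-1 else 0) => u uK.
    rewrite (split1 _ xK) eqxx big1 => [|w]; last first.
      by rewrite !inE => /andP[/negbTE-> _]; rewrite mulr0.
    rewrite addr0; case: (eqVneq u y) => [->|nuy]; first by rewrite mulfV.
    by rewrite sx0 // mul0r.
  move=> hle; exfalso; move: hle; apply/negP; rewrite -ltnNge nuK ltnS.
  rewrite DC (nu_isol Gsym) //.
  move=> z; rewrite !inE => /andP[zy zK]; apply/negP => g.
  by move: zy; rewrite (uniqN _ zK g) eqxx.
have sizeD2 : (#|K :\ x :\ y| <= n)%N.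
  by apply: leq_trans (sizeD1 x xK); rewrite subset_leq_card // subsetDl.
have fK' : FP (K :\ x :\ y).
  by apply: FP_sub fK; apply: subset_trans (subsetDl _ _) (subsetDl _ _).
case: (eqVneq v x) => [evx|nvx].
  subst v.
  have [IH1 IH2] := IH (K :\ x) (sizeD1 x xK) (FP_sub (subsetDl K [set x]) fK) y yKx.
  split.
    move=> hlt; rewrite nuK ltnS in hlt; have [g hg] := IH2 hlt.
    set t := (sk x y)^-1.
    exists (fun w => if w == x then 0 else if w == y then t else - t * g w) => u uK.
    rewrite (split1 _ xK) eqxx mulr0 add0r (split1 _ yKx) (negbTE yx) eqxx.
    rewrite (eq_bigr (fun w => - t * (sk u w * g w))); last first.
      by move=> w; rewrite !inE => /and3P[wy wx _]; rewrite (negbTE wx) (negbTE wy); ring.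
    rewrite -mulr_sumr.
    case: (eqVneq u x) => [->|nux].
      rewrite big1 ?mulr0 ?addr0 ?mulfV //.
      by move=> w; rewrite !inE => /and3P[wy _ wK]; rewrite sx0' ?mul0r.
    case: (eqVneq u y) => [->|nuy].
      have -> : \sum_(w in K :\ x :\ y) sk y w * g w = 0.
        transitivity (- \sum_(w in K :\ x :\ y) \sum_(l in K :\ x :\ y) g w * (sk w l * g l)).
          rewrite -sumrN; apply: eq_bigr => w wK'.
          by rewrite -mulr_sumr (hg w wK') skewN; ring.
        by rewrite dsum0 oppr0.
      by rewrite skew_xx /=; ring.
    have uK' : u \in K :\ x :\ y by rewrite !inE nux nuy.
    by rewrite (hg u uK') /=; ring.
  move=> hge; have hp : (nuG (K :\ x :\ y) < nuG (K :\ x))%N by rewrite -ltnS -nuK.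
  have [f hf] := IH1 hp.
  exists (fun w => sk y x * f w) => u uKx; have uK : u \in K by case/setD1P: uKx.
  rewrite (eq_bigr (fun w => sk y x * (sk u w * f w))) => [|w _]; last by ring.
  rewrite -mulr_sumr hf //.
  case: (eqVneq u y) => [->|nuy]; first by rewrite mulr1.
  by rewrite mulr0 sx0.
have vK' : v \in K :\ x :\ y by rewrite !inE nvx nvy.
have [IH1 IH2] := IH _ sizeD2 fK' v vK'.
have xKv : x \in K :\ v by rewrite !inE eq_sym nvx xK.
have yKvx : y \in K :\ v :\ x by rewrite !inE yx eq_sym nvy yK.
have eD : K :\ v :\ x :\ y = K :\ x :\ y :\ v.
  by apply/setP => z; rewrite !inE; case: (z == v); case: (z == x); case: (z == y).
have e1 : nuG (K :\ v) = (nuG (K :\ x :\ y :\ v)).+1.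
  rewrite -eD; apply: leaf; rewrite ?subsetDl //.
  by rewrite !inE yK eq_sym nvy.
split.
  move=> hlt; rewrite e1 nuK ltnS in hlt; have [f hf] := IH1 hlt.
  set al := - (\sum_(w in K :\ x :\ y) sk y w * f w) / sk y x.
  exists (fun w => if w == x then al else if w == y then 0 else f w) => u uK.
  rewrite (split1 _ xK) (split1 _ yKx) eqxx (negbTE yx) eqxx mulr0 add0r.
  rewrite (eq_bigr (fun w => sk u w * f w)); last first.
    by move=> w; rewrite !inE => /and3P[wy wx _]; rewrite (negbTE wx) (negbTE wy).
  case: (eqVneq u x) => [->|nux].
    rewrite skew_xx mul0r add0r big1; first by rewrite eq_sym (negbTE nvx).
    by move=> w; rewrite !inE => /and3P[wy _ wK]; rewrite sx0' ?mul0r.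
  case: (eqVneq u y) => [->|nuy].
    by rewrite /al mulrC mulfVK // addNr eq_sym (negbTE nvy).
  have uK' : u \in K :\ x :\ y by rewrite !inE nux nuy.
  by rewrite sx0 // mul0r add0r hf.
move=> hge; rewrite e1 nuK ltnS in hge; have [g hg] := IH2 hge.
set al := (sk y v - \sum_(w in K :\ x :\ y :\ v) sk y w * g w) / sk y x.
exists (fun w => if w == x then al else if w == y then 0 else g w) => u uKv.
have uK : u \in K by case/setD1P: uKv.
rewrite (split1 _ xKv) (split1 _ yKvx) eqxx (negbTE yx) eqxx mulr0 add0r eD.
rewrite (eq_bigr (fun w => sk u w * g w)); last first.
  by move=> w; rewrite !inE => /and4P[_ wy wx _]; rewrite (negbTE wx) (negbTE wy).
case: (eqVneq u x) => [->|nux].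
  rewrite skew_xx mul0r add0r big1; first by rewrite sx0'.
  by move=> w; rewrite !inE => /and4P[_ wy _ wK]; rewrite sx0' ?mul0r.
case: (eqVneq u y) => [->|nuy].
  by rewrite /al mulrC mulfVK // addrNK.
have uK' : u \in K :\ x :\ y :\ v.
  by move: uKv; rewrite !inE nux nuy => /andP[-> ->].
by rewrite sx0 // mul0r add0r hg.
Qed.
End Tree.

End MPB.
Import MPB.

Module MPC.
Set Implicit Arguments. Unset Strict Implicit. Unset Printing Implicit Defensive.

Section BFS.
Variable T : finType.
Variable r : rel T.
Hypothesis rsym : symmetric r.

Definition pairs (X : {set T}) : {set T * T} :=
  [set p | [&& p.1 \in X, p.2 \in X & r p.1 p.2]].

Lemma cardsUd (Y : finType) (A B : {set Y}) :
  [disjoint A & B] -> #|A :|: B| = #|A| + #|B|.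
Proof. by move=> d; rewrite cardsU -setI_eq0 in d *; rewrite (eqP d) cards0 subn0. Qed.

Variables U S : {set T}.
Hypothesis SU : S \subset U.
Hypothesis closedU : forall x y, x \in U -> r x y -> y \in U.

Fixpoint reach n : {set T} :=
  if n is m.+1 then reach m :|: [set x in U | [exists y in reach m, r y x]] else S.

Lemma reach_sub n : reach n \subset U.
Proof.
elim: n => //= n IH; apply/subsetP => x; rewrite !inE => /orP[/(subsetP IH)//|].
by case/andP.
Qed.

Lemma reach_path q x m : x \in reach m -> path r x q -> last x q \in reach (m + size q).
Proof.
elim: q x m => [|y q IHq] x m /=; first by rewrite addn0.
move=> xm /andP[rxy pq]; rewrite -addSnnS; apply: IHq pq => /=.
rewrite !inE; apply/orP; right; rewrite (closedU (subsetP (reach_sub m) _ xm) rxy).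
by apply/existsP; exists x; rewrite xm.
Qed.

Hypothesis reachable : forall u, u \in U -> exists2 s, s \in S & connect r s u.

Lemma parent_ex : exists d : T -> nat, exists p : T -> T,
  forall u, u \in U :\: S -> [/\ p u \in U, r u (p u) & d (p u) < d u].
Proof.
have hd : forall u, exists n, u \in U -> u \in reach n /\ forall m, u \in reach m -> n <= m.
  move=> u; case: (boolP (u \in U)) => uU; last by exists 0.
  have [s sS /connectP[q pq ->]] := reachable uU.
  have ex : exists n, last s q \in reach n.
    by exists (0 + size q); apply: reach_path.
  case: (ex_minnP ex) => n hn hmin; exists n => _; split=> //.
have [d hdd] := fin_all_exists hd.
have hp : forall u, exists y, u \in U :\: S -> [/\ y \in U, r u y & d y < d u].
  move=> u; case: (boolP (u \in U :\: S)) => uUS; last by exists u.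
  case/setDP: uUS => uU uS; have [h1 h2] := hdd u uU.
  move: h1 h2; case e: (d u) => [|m] h1 h2; first by move: uS; rewrite h1.
  move: h1 => /=; rewrite inE => /orP[h|]; first by have := h2 _ h; rewrite ltnn.
  rewrite inE => /andP[_ /existsP[y /andP[ym ryu]]].
  exists y => _; split; first exact: subsetP (reach_sub m) _ ym.
    by rewrite rsym.
  have [_ hy] := hdd y (subsetP (reach_sub m) _ ym).
  by rewrite ltnS; apply: hy.
have [p hpp] := fin_all_exists hp.
by exists d, p.
Qed.

Lemma bfs_count (X : {set T * T}) (d : T -> nat) (p : T -> T) :
  (forall u, u \in U :\: S -> [/\ p u \in U, r u (p u) & d (p u) < d u]) ->
  X \subset pairs U -> [disjoint X & pairs S] ->
  [disjoint X & [set (u, p u) | u in U :\: S] :|: [set (p u, u) | u in U :\: S]] ->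
  #|pairs S| + 2 * #|U :\: S| + #|X| <= #|pairs U|.
Proof.
move=> hp XU XS XI.
set I1 := [set (u, p u) | u in U :\: S]; set I2 := [set (p u, u) | u in U :\: S].
have c1 : #|I1| = #|U :\: S| by apply: card_in_imset => u v _ _ [].
have c2 : #|I2| = #|U :\: S| by apply: card_in_imset => u v _ _ [].
have d12 : [disjoint I1 & I2].
  apply/disjI => q /imsetP[u uUS ->] /imsetP[w wUS [e1 e2]].
  have [_ _ h1] := hp u uUS; have [_ _ h2] := hp w wUS.
  by move: h1 h2; rewrite -e1 -e2; move=> h1 h2; have := ltn_trans h1 h2; rewrite ltnn.
have dS : [disjoint pairs S & I1 :|: I2].
  apply/disjI => q; rewrite inE => /and3P[q1 q2 _]; rewrite inE.
  case/orP => /imsetP[u /setDP[_ uS] e]; move: q1 q2; rewrite e //= => h; first by rewrite h in uS.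
  by move=> h'; rewrite h' in uS.
have sub : pairs S :|: (I1 :|: I2) :|: X \subset pairs U.
  apply/subsetP => q; rewrite !inE => /orP[/orP[|]|].
  - by case/and3P => q1 q2 ->; rewrite (subsetP SU _ q1) (subsetP SU _ q2).
  - case/orP => /imsetP[u uUS ->] /=; have [h1 h2 _] := hp u uUS;
      move/setDP: uUS => [uU _]; rewrite h1 uU //=; by rewrite rsym.
  - by move/(subsetP XU); rewrite inE.
have := subset_leq_card sub.
rewrite cardsUd; last first.
  by rewrite disjoint_sym; apply/disjI => q qX; rewrite inE => /orP[|];
    [apply: disjW XS qX|apply: disjW XI qX].
rewrite cardsUd // cardsUd // c1 c2.
by move=> h; apply: leq_trans h; rewrite mul2n -addnn addnA.
Qed.

End BFS.

Lemma deg_sum (T : finType) (r : rel T) (S : {set T}) :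
  #|pairs r S| = \sum_(x in S) #|[set y in S | r x y]|.
Proof.
rewrite (eq_bigr (fun x => \sum_(y | (y \in S) && r x y) 1)); last first.
  by move=> x _; rewrite sum1dep_card.
rewrite pair_big_dep /= sum1dep_card; apply: eq_card => q; rewrite !inE.
by case: q => /= x y; rewrite andbA.
Qed.

End MPC.
Import MPC.

Module MPD.
Set Implicit Arguments. Unset Strict Implicit. Unset Printing Implicit Defensive.

Lemma ar1 Z A B C1 D E F I J : Z + 2 * (C1 - 1) <= A -> A + I <= B -> B + 2 * (D - E) <= 2 * D ->
  2 <= F -> E = C1 + J - F -> E <= D -> 2 * J <= I -> 1 <= C1 -> F <= C1 -> False.
Proof. lia. Qed.
Lemma ar2 A B C1 D E F I J : 2 * C1 <= A -> A + I <= B -> B + 2 * (D - E) <= 2 * D ->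
  1 <= F -> E = C1 + J - F -> E <= D -> 2 * J <= I -> F <= C1 -> False.
Proof. lia. Qed.
Lemma ar3 A B C1 D : 2 * C1 <= A -> A <= B -> C1 <= D -> B + 2 * (D - C1) + 2 <= 2 * D -> False.
Proof. lia. Qed.

Section Uni.
Variable T : finType.
Variable a : rel T.
Variable c : seq T.
Hypothesis ao : oriented a.
Hypothesis conn : connected_graph a.
Hypothesis ne : n_edges a = #|T|.
Hypothesis cyc : is_graph_cycle a c.

Local Notation G := (und a).
Local Notation H := (del_cycle_edges a c).
Local Notation C := (cycle_verts c).

Lemma uc : uniq c. Proof. by case: cyc. Qed.
Lemma sc : 3 <= size c. Proof. by case: cyc. Qed.
Lemma cc : cycle G c. Proof. by case: cyc. Qed.

Lemma cardC : #|C| = size c.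
Proof. by rewrite cardsE; apply/card_uniqP/uc. Qed.

Lemma inC x : (x \in C) = (x \in c). Proof. by rewrite inE. Qed.

Lemma nn x : x \in c -> next c (next c x) != x.
Proof.
move=> xc; case: (rot_to xc) => i q e.
rewrite -!(next_rot i uc) e.
have := sc; rewrite -(size_rot i) e.
have := uc; rewrite -(rot_uniq i) e.
case: q e => [|y [|z q]] e //= /and3P[]; rewrite !inE !negb_or => /and3P[xy xz _].
move=> /andP[yz _] _ _.
rewrite /next /= eqxx [y == x]eq_sym (negbTE xy) eqxx eq_sym //.
Qed.

Lemma cycG x : x \in c -> G x (next c x).
Proof. by move=> xc; apply: (next_cycle cc). Qed.

Lemma cycG' x : x \in c -> G (prev c x) x.
Proof.
move=> xc; have := @cycG (prev c x); rewrite mem_prev (next_prev uc); exact.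
Qed.

Lemma Hsym : symmetric H.
Proof.
move=> x y; rewrite /del_cycle_edges /cycle_edge Gsym; congr (_ && ~~ _).
by rewrite andbCA orbC.
Qed.

Lemma HG x y : H x y -> G x y.
Proof. by case/andP. Qed.

Definition CP := [set q : T * T | cycle_edge c q.1 q.2].

Lemma CP_sub : CP \subset pairs G C.
Proof.
apply/subsetP => -[x y]; rewrite !inE /cycle_edge /= => /and3P[xc yc /orP[]/eqP<-].
  by rewrite xc mem_next xc cycG.
by rewrite yc mem_next yc Gsym cycG.
Qed.

Lemma CP_dis (X : {set T}) : [disjoint pairs H X & CP].
Proof.
apply/disjI => -[x y]; rewrite !inE /= /del_cycle_edges => /and3P[_ _ /andP[_ h]].
by rewrite (negbTE h).
Qed.

Lemma CP_card : 2 * size c <= #|CP|.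
Proof.
set I1 := [set (x, next c x) | x in C]; set I2 := [set (next c x, x) | x in C].
have c1 : #|I1| = size c by rewrite card_in_imset ?cardC // => u v _ _ [].
have c2 : #|I2| = size c by rewrite card_in_imset ?cardC // => u v _ _ [].
have d12 : [disjoint I1 & I2].
  apply/disjI => q /imsetP[u uc ->] /imsetP[w wc [e1 e2]].
  rewrite inC in wc; by move: (nn wc); rewrite -e1 e2 eqxx.
have : I1 :|: I2 \subset CP.
  apply/subsetP => q; rewrite inE => /orP[] /imsetP[u uc ->]; rewrite inC in uc;
    by rewrite !inE /cycle_edge /= mem_next uc eqxx ?orbT.
by move/subset_leq_card; rewrite cardsUd // c1 c2 addnn mul2n.
Qed.

Lemma E0 : #|pairs G setT| = 2 * #|T|.
Proof.
set A := [set q : T * T | a q.1 q.2].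
set sw := fun q : T * T => (q.2, q.1).
have swK : involutive sw by case.
have e : pairs G setT = A :|: sw @: A.
  apply/setP => -[x y]; rewrite !inE /und /=; congr (_ || _).
  apply/idP/imsetP => [h|[[u w] h [-> ->]]]; last by rewrite inE in h.
  by exists (y, x); rewrite ?inE.
rewrite e cardsUd.
  by rewrite card_imset; [rewrite -ne addnn mul2n | exact: inv_inj].
apply/disjI => -[x y]; rewrite inE => /= axy /imsetP[[u w]]; rewrite inE /= => auw [e1 e2].
by case: ao => _ h; move: (h _ _ axy); rewrite e1 e2 auw.
Qed.

Lemma reach_all (S : {set T}) : S != set0 ->
  forall u, u \in [set: T] -> exists2 s, s \in S & connect G s u.
Proof. by case/set0Pn => s sS u _; exists s => //; apply: conn. Qed.

Lemma bfsG (S : {set T}) (X : {set T * T}) (d : T -> nat) (p : T -> T) :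
  (forall u, u \in [set: T] :\: S -> [/\ p u \in [set: T], G u (p u) & d (p u) < d u]) ->
  X \subset pairs G setT -> [disjoint X & pairs G S] ->
  [disjoint X & [set (u, p u) | u in [set: T] :\: S] :|: [set (p u, u) | u in [set: T] :\: S]] ->
  #|pairs G S| + 2 * (#|T| - #|S|) + #|X| <= 2 * #|T|.
Proof.
move=> hp XU XS XI; rewrite -E0 -{1}(cardsC S) addKn -setTD.
have := bfs_count (@Gsym _ a) (subsetT S) hp XU XS XI. by apply.
Qed.

Lemma dis0 (Y : finType) (A : {set Y}) : [disjoint set0 & A].
Proof. by apply/disjI => x; rewrite inE. Qed.

Lemma F1 v w : v \in c -> w \in c -> connect H v w -> v = w.
Proof.
move=> vc wc hc; apply/eqP; apply/negPn/negP => nvw.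
set U := [set u | connect H v u].
have vU : v \in U by rewrite inE connect0.
have wU : w \in U by rewrite inE.
have SU : [set v] \subset U by rewrite sub1set.
have closedU : forall x y, x \in U -> H x y -> y \in U.
  by move=> x y; rewrite !inE => hx hxy; apply: connect_trans hx (connect1 hxy).
have reachU : forall u, u \in U -> exists2 s, s \in [set v] & connect H s u.
  by move=> u; rewrite inE => hu; exists v; rewrite ?set11.
have [d [p hp]] := parent_ex Hsym SU closedU reachU.
have h1 := bfs_count Hsym SU hp (sub0set _) (dis0 _) (dis0 _).
rewrite cards0 addn0 in h1.
have eU : #|U :\: [set v]| = #|U| - 1 by rewrite (cardsD1 v U) vU add1n subn1.
rewrite eU in h1.
set S' := U :|: C.
have h2 : #|pairs H U| + #|CP| <= #|pairs G S'|.
  rewrite -cardsUd ?CP_dis //; apply: subset_leq_card; apply/subsetP => q.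
  rewrite inE => /orP[|].
    by rewrite !inE => /and3P[-> -> /HG ->].
  move/(subsetP CP_sub); rewrite !inE => /and3P[-> -> ->]; by rewrite !orbT.
have S'n0 : S' != set0 by apply/set0Pn; exists v; rewrite in_setU vU.
have [d' [p' hp']] := parent_ex (@Gsym _ a) (subsetT S') (fun _ _ _ _ => in_setT _) (reach_all S'n0).
have h3 := bfsG hp' (sub0set _) (dis0 _) (dis0 _).
rewrite cards0 addn0 in h3.
have h4 : 2 <= #|U :&: C|.
  have : [set v; w] \subset U :&: C.
    by apply/subsetP => z; rewrite !in_set2 => /orP[]/eqP->; rewrite in_setI ?vU ?wU inC ?vc ?wc.
  by move/subset_leq_card; rewrite cards2 nvw.
have h5 := cardsU U C; rewrite cardC in h5.
have h6 : #|S'| <= #|T| := max_card _.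
have h7 := CP_card.
have h8 : 1 <= #|U| by apply/card_gt0P; exists v.
have h9 : #|U :&: C| <= #|U| by apply: subset_leq_card; apply: subsetIl.
rewrite -/S' in h5.
move: h1 h2 h3 h4 h5 h6 h7 h8 h9.
exact: ar1.
Qed.

Lemma F2 (S : {set T}) : S != set0 -> exists2 x, x \in S & #|[set y in S | H x y]| <= 1.
Proof.
move=> Sn0.
case: (boolP [exists x in S, #|[set y in S | H x y]| <= 1]).
  by case/existsP => x /andP[xS h]; exists x.
rewrite negb_exists => /forallP hdeg.
have hS : 2 * #|S| <= #|pairs H S|.
  rewrite deg_sum mulnC -sum_nat_const; apply: leq_sum => x xS.
  by have := hdeg x; rewrite xS /= -ltnNge.
case: (boolP [exists x in S, x \in c]).
  case/existsP => x0 /andP[x0S x0c].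
  set S' := S :|: C.
  have h2 : #|pairs H S| + #|CP| <= #|pairs G S'|.
    rewrite -cardsUd ?CP_dis //; apply: subset_leq_card; apply/subsetP => q.
    rewrite inE => /orP[|].
      by rewrite !inE => /and3P[-> -> /HG ->].
    move/(subsetP CP_sub); rewrite !inE => /and3P[-> -> ->]; by rewrite !orbT.
  have S'n0 : S' != set0 by apply/set0Pn; exists x0; rewrite in_setU x0S.
  have [d' [p' hp']] := parent_ex (@Gsym _ a) (subsetT S') (fun _ _ _ _ => in_setT _) (reach_all S'n0).
  have h3 := bfsG hp' (sub0set _) (dis0 _) (dis0 _).
  rewrite cards0 addn0 in h3.
  have h4 : 1 <= #|S :&: C| by apply/card_gt0P; exists x0; rewrite in_setI x0S inC.
  have h5 := cardsU S C; rewrite cardC in h5.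
  have h6 : #|S'| <= #|T| := max_card _.
  have h7 := CP_card.
  have h9 : #|S :&: C| <= #|S| by apply: subset_leq_card; apply: subsetIl.
  rewrite -/S' in h5.
  exfalso; move: hS h2 h3 h4 h5 h6 h7 h9.
  exact: ar2.
rewrite negb_exists => /forallP hSc.
have Sc : forall x, x \in c -> x \notin S.
  by move=> x xc; apply/negP => xS; have := hSc x; rewrite xS xc.
have [d' [p hp]] := parent_ex (@Gsym _ a) (subsetT S) (fun _ _ _ _ => in_setT _) (reach_all Sn0).
have [x0 x0c] : exists x0, x0 \in C.
  by have := sc; case: c => // x0 q _; exists x0; rewrite /cycle_verts inE mem_head.
case: (arg_maxnP d' x0c) => u0 u0C umax.
have u0c : u0 \in c by rewrite -inC.
have uS : u0 \in [set: T] :\: S by rewrite !inE Sc.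
set z := if next c u0 == p u0 then prev c u0 else next c u0.
have zc : z \in c by rewrite /z; case: ifP; rewrite ?mem_prev ?mem_next.
have zp : z != p u0.
  rewrite /z; case: ifP => [/eqP <-|/negbT //].
  have hpc : prev c u0 \in c by rewrite mem_prev.
  by move: (nn hpc); rewrite (next_prev uc) eq_sym.
have Gz : G u0 z by rewrite /z; case: ifP => _; [rewrite Gsym cycG' | rewrite cycG].
have zu : z != u0 by apply: contraTneq Gz => ->; rewrite Girr.
have zC : z \in C by rewrite inC.
have dz : d' z <= d' u0 := umax z zC.
set X := [set (u0, z); (z, u0)].
have cX : #|X| = 2 by rewrite cards2; case: eqP => // -[e]; move: zu; rewrite e eqxx.
have XG : X \subset pairs G setT.
  by apply/subsetP => q; rewrite !inE => /orP[]/eqP-> /=; rewrite ?Gz // Gsym.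
have XS : [disjoint X & pairs G S].
  apply/disjI => q; rewrite !inE => /orP[]/eqP-> /=; rewrite (negbTE (Sc _ u0c)) //.
  by rewrite andbF.
have XI : [disjoint X & [set (u, p u) | u in [set: T] :\: S] :|: [set (p u, u) | u in [set: T] :\: S]].
  have zS : z \in [set: T] :\: S by rewrite !inE Sc.
  have pz : p z != u0.
    apply/negP => /eqP e; have [_ _ h] := hp z zS; move: h; rewrite e => h.
    by have := leq_trans h dz; rewrite ltnn.
  apply/disjI => q; rewrite !inE => /orP[]/eqP-> /orP[] /imsetP[w _ [e1 e2]].
  - by move: zp; rewrite e1 e2 eqxx.
  - by move: pz; rewrite e2 e1 eqxx.
  - by move: pz; rewrite e1 e2 eqxx.
  - by move: zp; rewrite e1 e2 eqxx.
have h3 := bfsG hp XG XS XI.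
have hHG : #|pairs H S| <= #|pairs G S|.
  by apply: subset_leq_card; apply/subsetP => q; rewrite !inE => /and3P[-> -> /HG].
have h6 : #|S| <= #|T| := max_card _.
rewrite cX in h3.
exfalso; move: hS hHG h6 h3.
exact: ar3.
Qed.

Local Notation Tv v := (rooted_tree a c v).

Lemma Tv_in v : v \in Tv v.
Proof. by rewrite inE connect0. Qed.

Lemma Tv_c v x : v \in c -> x \in c -> x \in Tv v -> x = v.
Proof. by move=> vc xc; rewrite inE => h; apply/esym/F1. Qed.

Lemma Tv_cross v x y : v \in c -> x \in Tv v -> y \notin Tv v -> G x y -> x = v /\ y \in c.
Proof.
move=> vc xT yT gxy.
case: (boolP (cycle_edge c x y)) => [/and3P[xc yc _]|nce].
  by split=> //; apply: Tv_c.
have hxy : H x y by rewrite /del_cycle_edges gxy.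
move: yT; rewrite !inE in xT *; by rewrite (connect_trans xT (connect1 hxy)).
Qed.

Lemma Tv_disj v w u : v \in c -> w \in c -> v != w -> u \in Tv v -> u \notin Tv w.
Proof.
move=> vc wc nvw; rewrite !inE => hv; apply/negP => hw.
have : connect H v w.
  by apply: connect_trans hv _; rewrite (sym_connect_sym Hsym).
by move/(F1 vc wc)/eqP; rewrite (negbTE nvw).
Qed.

Lemma Tv_GH v : v \in c -> {in Tv v &, forall x y, G x y = H x y}.
Proof.
move=> vc x y xT yT; apply/idP/idP => [gxy|/HG //].
rewrite /del_cycle_edges gxy /=; apply/negP => /and3P[xc yc _].
move: gxy; rewrite (Tv_c vc xc xT) (Tv_c vc yc yT); by rewrite (negbTE (Girr ao v)).
Qed.

Lemma FP_Tv v : v \in c -> FP a (Tv v).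
Proof.
move=> vc S sS Sn0; have [x xS hx] := F2 Sn0; exists x => //.
rewrite (eq_card (B := [set y in S | H x y])) // => y; rewrite !inE.
case: (boolP (y \in S)) => //= yS.
by rewrite (Tv_GH vc (subsetP sS _ xS) (subsetP sS _ yS)).
Qed.

End Uni.

End MPD.
Import MPD.

Module MPE.
Set Implicit Arguments. Unset Strict Implicit. Unset Printing Implicit Defensive.
Import GRing.Theory Num.Theory.
Local Open Scope ring_scope.

Section RankSplit.
Variable n : nat.
Variables (P R A X : 'M[rat]_n).
Hypotheses (PP : P *m P = P) (RR : R *m R = R) (PR : P *m R = 0) (RP : R *m P = 0).
Hypotheses (PRI : P + R = 1%:M) (Pt : P^T = P) (Rt : R^T = R) (At : A^T = - A).
Hypothesis hC : P *m A *m R = (P *m A *m P) *m X.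
Hypothesis hZ : X^T *m (P *m A *m P) *m X = 0.

Local Notation A1 := (P *m A *m P).
Local Notation A2 := (R *m A *m R).
Local Notation Cc := (P *m A *m R).
Local Notation Y := (P *m X *m R).

Lemma PA1 : P *m A1 = A1. Proof. by rewrite !mulmxA PP. Qed.
Lemma A1P : A1 *m P = A1. Proof. by rewrite -mulmxA PP. Qed.
Lemma A1R : A1 *m R = 0. Proof. by rewrite -mulmxA PR mulmx0. Qed.
Lemma RA1 : R *m A1 = 0. Proof. by rewrite !mulmxA RP !mul0mx. Qed.
Lemma RA2 : R *m A2 = A2. Proof. by rewrite !mulmxA RR. Qed.
Lemma A2R : A2 *m R = A2. Proof. by rewrite -mulmxA RR. Qed.
Lemma PA2 : P *m A2 = 0. Proof. by rewrite !mulmxA PR !mul0mx. Qed.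
Lemma A2P : A2 *m P = 0. Proof. by rewrite -mulmxA RP mulmx0. Qed.

Lemma s1 : A1 *m Y = Cc.
Proof. by rewrite !mulmxA -[A1 *m P]mulmxA PP -hC -mulmxA RR. Qed.

Lemma Yt : Y^T = R *m X^T *m P.
Proof. by rewrite !trmx_mul Pt Rt mulmxA. Qed.

Lemma mPP m (Z : 'M_(m, n)) : Z *m P *m P = Z *m P. Proof. by rewrite -mulmxA PP. Qed.

Lemma s2 : Y^T *m A1 *m Y = 0.
Proof.
rewrite Yt !mulmxA !mPP.
have e : R *m X^T *m P *m A *m P *m X = R *m (X^T *m (P *m A *m P) *m X).
  by rewrite !mulmxA.
by rewrite e hZ mulmx0 mul0mx.
Qed.

Lemma s3 : A = A1 + Cc + R *m A *m P + A2.
Proof.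
have e : A = (P + R) *m A *m (P + R) by rewrite PRI mul1mx mulmx1.
by rewrite {1}e !mulmxDl !mulmxDr !addrA.
Qed.

Lemma s4 : R *m A *m P = - Cc^T.
Proof. by rewrite !trmx_mul Rt Pt At mulNmx mulmxN opprK mulmxA. Qed.

Lemma s5 : A1^T = - A1.
Proof. by rewrite !trmx_mul Pt At mulNmx mulmxN mulmxA. Qed.

Lemma s6 : A *m Y = Cc.
Proof.
rewrite {1}s3 !mulmxDl s1 s4.
have -> : Cc *m Y = 0 by rewrite !mulmxA -[Cc *m P]mulmxA RP mulmx0 !mul0mx.
have -> : A2 *m Y = 0 by rewrite !mulmxA A2P !mul0mx.
have -> : - Cc^T *m Y = 0.
  by rewrite -s1 (trmx_mul A1 Y) s5 mulmxN opprK s2.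
by rewrite !addr0.
Qed.

Lemma s7 : Y^T *m A = - Cc^T.
Proof. by rewrite -s6 (trmx_mul A Y) At mulmxN opprK. Qed.

Lemma s8 : Y^T *m A *m Y = 0.
Proof. by rewrite -mulmxA s6 -s1 mulmxA s2. Qed.

Lemma YY : Y *m Y = 0.
Proof. by rewrite !mulmxA -[P *m X *m R *m P]mulmxA RP mulmx0 !mul0mx. Qed.

Lemma QAQ : (1%:M - Y)^T *m A *m (1%:M - Y) = A1 + A2.
Proof.
rewrite [(1%:M - Y)^T]linearB /= trmx1 !mulmxBl !mulmxBr !mul1mx !mulmx1.
rewrite s8 s6 s7 {1}s3 s4; apply/matrixP => i j; rewrite !mxE.
move: (\sum_j0 _) (\sum_j0 _) (\sum_j0 _) (\sum_j0 _) => x1 x2 x3 x4.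
ring.
Qed.

Lemma Qunit : (1%:M - Y) \in unitmx.
Proof.
have h : (1%:M - Y) *m (1%:M + Y) = 1%:M.
  by rewrite mulmxBl !mulmxDr YY !mul1mx mulmx1 addr0 addrK.
by case: (mulmx1_unit h).
Qed.

Lemma rank_QAQ : \rank A = \rank (A1 + A2)%R.
Proof.
rewrite -QAQ mxrankMfree ?row_free_unit ?Qunit //.
by rewrite -[in RHS]mxrank_tr trmx_mul trmxK mxrankMfree ?row_free_unit ?Qunit // At mxrank_opp.
Qed.

Lemma rank_sum2 : \rank (A1 + A2)%R = (\rank A1 + \rank A2)%N.
Proof.
have e1 : A1 = P *m (A1 + A2) by rewrite mulmxDr PA1 PA2 addr0.
have e2 : A2 = R *m (A1 + A2) by rewrite mulmxDr RA1 RA2 add0r.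
rewrite -mxrank_disjoint_sum.
  apply: eqmx_rank; apply/andP; split.
    by apply: addmx_sub_adds; apply: submx_refl.
  rewrite addsmx_sub; apply/andP; split.
    by rewrite {1}e1 submxMl.
  by rewrite {1}e2 submxMl.
set Z := (A1 :&: A2)%MS.
have /submxP [D1 hD1] : (Z <= A1)%MS := capmxSl _ _.
have /submxP [D2 hD2] : (Z <= A2)%MS := capmxSr _ _.
have h1 : Z *m R = 0 by rewrite hD1 -mulmxA A1R mulmx0.
have h2 : Z *m R = Z by rewrite hD2 -mulmxA A2R.
by rewrite -h2 h1.
Qed.

Lemma rank_split : \rank A = (\rank A1 + \rank A2)%N.
Proof. by rewrite rank_QAQ rank_sum2. Qed.
End RankSplit.

End MPE.
Import MPE.

Module MPF.
Set Implicit Arguments. Unset Strict Implicit. Unset Printing Implicit Defensive.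
Import GRing.Theory Num.Theory.
Local Open Scope ring_scope.

Section Mat.
Variable T : finType.

Definition mx (F : T -> T -> rat) : 'M[rat]_#|T| := \matrix_(i, j) F (enum_val i) (enum_val j).

Lemma sumT (F : T -> rat) : \sum_(k < #|T|) F (enum_val k) = \sum_x F x.
Proof. by rewrite -(big_enum_val (A := T)). Qed.

Lemma sumS (S : {set T}) (F : T -> rat) : \sum_(k < #|S|) F (enum_val k) = \sum_(x in S) F x.
Proof. by rewrite -big_enum_val. Qed.

Lemma mxE' F i j : mx F i j = F (enum_val i) (enum_val j).
Proof. by rewrite mxE. Qed.

Lemma mx_mul B C : mx B *m mx C = mx (fun u w => \sum_x B u x * C x w).
Proof.
apply/matrixP => i j; rewrite !mxE.
by rewrite -(sumT (fun x => B (enum_val i) x * C x (enum_val j))); apply: eq_bigr => k _; rewrite !mxE.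
Qed.

Lemma mx_tr B : (mx B)^T = mx (fun u w => B w u).
Proof. by apply/matrixP => i j; rewrite !mxE. Qed.

Lemma mx_ext B C : (forall u w, B u w = C u w) -> mx B = mx C.
Proof. by move=> h; apply/matrixP => i j; rewrite !mxE h. Qed.

Lemma mx_add B C : mx B + mx C = mx (fun u w => B u w + C u w).
Proof. by apply/matrixP => i j; rewrite !mxE. Qed.

Lemma mx0 : mx (fun _ _ => 0) = 0.
Proof. by apply/matrixP => i j; rewrite !mxE. Qed.

Lemma mx1 : mx (fun u w => (u == w)%:R) = 1%:M.
Proof. by apply/matrixP => i j; rewrite !mxE (inj_eq enum_val_inj). Qed.

Lemma sum_delta (u : T) (b : T -> bool) (F : T -> rat) :
  \sum_x ((u == x) && b x)%:R * F x = (b u)%:R * F u.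
Proof.
rewrite (bigD1 u) //= eqxx big1 ?addr0 // => x xu.
by rewrite eq_sym (negbTE xu) mul0r.
Qed.

Lemma sum_delta' (w : T) (b : T -> bool) (F : T -> rat) :
  \sum_x F x * ((x == w) && b x)%:R = F w * (b w)%:R.
Proof.
rewrite (bigD1 w) //= eqxx big1 ?addr0 // => x xw.
by rewrite (negbTE xw) mulr0.
Qed.

Definition Dm (K : {set T}) := mx (fun u w => ((u == w) && (u \in K))%:R).

Lemma DMD (K L : {set T}) B :
  Dm K *m mx B *m Dm L = mx (fun u w => (u \in K)%:R * B u w * (w \in L)%:R).
Proof.
rewrite /Dm !mx_mul; apply: mx_ext => u w.
rewrite (sum_delta' w (fun x => x \in L) (fun x => \sum_y ((u == y) && (u \in K))%:R * B y x)).
rewrite (sum_delta u (fun _ => u \in K) (fun y => B y w)); case: (w \in L); case: (u \in K) => /=; ring.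
Qed.

Lemma Dm_mul (K L : {set T}) : Dm K *m Dm L = Dm (K :&: L).
Proof.
rewrite /Dm mx_mul; apply: mx_ext => u w.
rewrite (sum_delta u (fun _ => u \in K) (fun x => ((x == w) && (x \in L))%:R)) inE.
case: (u \in K); case: (u == w) /eqP => [->|] //=; rewrite ?mul0r ?mul1r ?mulr0 //.
Qed.

Lemma Dm_tr K : (Dm K)^T = Dm K.
Proof.
rewrite /Dm mx_tr; apply: mx_ext => u w; by case: (eqVneq u w) => [->|h].
Qed.

Lemma Dm_set0 : Dm set0 = 0.
Proof. by rewrite -mx0; apply: mx_ext => u w; rewrite inE andbF. Qed.

Lemma Dm_setT : Dm setT = 1%:M.
Proof. by rewrite -mx1; apply: mx_ext => u w; rewrite inE andbT. Qed.

Lemma Dm_add K : Dm K + Dm (~: K) = 1%:M.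
Proof.
rewrite -mx1 /Dm mx_add; apply: mx_ext => u w; rewrite inE.
by case: (u == w); case: (u \in K).
Qed.


Lemma rank_eq_rel (i : 'I_#|T|) (x : T) : (enum_rank x == i) = (x == enum_val i).
Proof. by rewrite -{1}(enum_valK i) (inj_eq enum_rank_inj). Qed.

Lemma sum_in_delta (S : {set T}) (t : T) (F : T -> rat) :
  \sum_(x in S) (x == t)%:R * F x = (t \in S)%:R * F t.
Proof.
case: (boolP (t \in S)) => tS.
  rewrite (bigD1 t) //= eqxx big1 ?addr0 // => x /andP[_ xt].
  by rewrite (negbTE xt) mul0r.
rewrite big1 ?mul0r // => x xS; case: eqP => [e|]; last by rewrite mul0r.
by move: tS; rewrite -e xS.
Qed.

Lemma sum_in_delta' (S : {set T}) (t : T) (F : T -> rat) :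
  \sum_(x in S) F x * (x == t)%:R = F t * (t \in S)%:R.
Proof.
rewrite mulrC -sum_in_delta; apply: eq_bigr => x _; by rewrite mulrC.
Qed.

Variable a : rel T.

Definition NKf (K : {set T}) := fun u w => (u \in K)%:R * Defs.skew a u w * (w \in K)%:R.

Lemma sr_mx (S : {set T}) : sr a S = \rank (mx (NKf S)).
Proof.
set E : 'M[rat]_(#|S|, #|T|) := \matrix_(i, j) (enum_rank (enum_val i) == j)%:R.
have e1 : mx (NKf S) = E^T *m skew_mx a S *m E.
  apply/matrixP => i j; rewrite !mxE.
  rewrite (eq_bigr (fun l : 'I_#|S| => (\sum_(k < #|S|) (enum_val k == enum_val i)%:R *
        Defs.skew a (enum_val k) (enum_val l)) * (enum_val l == enum_val j)%:R)); last first.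
    move=> l _; rewrite !mxE rank_eq_rel; congr (_ * _).
    by apply: eq_bigr => k _; rewrite !mxE rank_eq_rel.
  rewrite (sumS S (fun y => (\sum_k (enum_val k == enum_val i)%:R *
        Defs.skew a (enum_val k) y) * (y == enum_val j)%:R)) /=.
  rewrite sum_in_delta'.
  rewrite (sumS S (fun x => (x == enum_val i)%:R * Defs.skew a x (enum_val j))) /=.
  by rewrite sum_in_delta /NKf; ring.
have e2 : E *m E^T = 1%:M.
  apply/matrixP => i j; rewrite !mxE (bigD1 (enum_rank (enum_val i))) //= !mxE eqxx mul1r.
  rewrite big1 ?addr0; last first.
    by move=> k kn; rewrite !mxE eq_sym (negbTE kn) mul0r.
  by rewrite eq_sym (inj_eq enum_rank_inj) (inj_eq enum_val_inj).
rewrite /sr; apply/eqP; rewrite eqn_leq; apply/andP; split.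
  have -> : skew_mx a S = E *m mx (NKf S) *m E^T.
    by rewrite e1 !mulmxA e2 mul1mx -mulmxA e2 mulmx1.
  by apply: leq_trans (mxrankM_maxl _ _) _; apply: mxrankM_maxr.
by rewrite e1; apply: leq_trans (mxrankM_maxl _ _) _; apply: mxrankM_maxr.
Qed.

End Mat.

End MPF.
Import MPF.

Module MPG.
Set Implicit Arguments. Unset Strict Implicit. Unset Printing Implicit Defensive.
Import GRing.Theory Num.Theory.
Local Open Scope ring_scope.

Section Split.
Variable T : finType.
Variable a : rel T.
Hypothesis ao : oriented a.
Local Notation sk := (Defs.skew a).

Lemma sum_ind (K : {set T}) (F : T -> rat) :
  \sum_x (x \in K)%:R * F x = \sum_(x in K) F x.
Proof.
rewrite [RHS]big_mkcond; apply: eq_bigr => x _.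
by case: (x \in K); rewrite ?mul1r ?mul0r.
Qed.

Lemma mx_opp (B : T -> T -> rat) : - mx B = mx (fun u w => - B u w).
Proof. by apply/matrixP => i j; rewrite !mxE. Qed.

Lemma dsumT (F : T -> rat) : \sum_x \sum_y F x * (sk x y * F y) = 0.
Proof.
set S := \sum_x _.
have : S = - S.
  rewrite {1}/S exchange_big /= -sumrN; apply: eq_bigr => l _.
  rewrite -sumrN; apply: eq_bigr => k _; rewrite (skewN ao); ring.
move=> h; lra.
Qed.

Lemma Mt : (mx sk)^T = - mx sk.
Proof. by rewrite mx_tr mx_opp; apply: mx_ext => u w; rewrite (skewN ao). Qed.

Lemma srT : sr a setT = \rank (mx sk).
Proof.
rewrite sr_mx; congr (\rank _); apply: mx_ext => u w.
by rewrite /NKf !inE mul1r mulr1.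
Qed.

Lemma split_gen (K : {set T}) (xf : T -> T -> rat) :
  (forall u w, (u \in K)%:R * sk u w * (w \in ~: K)%:R = \sum_x NKf a K u x * xf x w) ->
  (forall u w, \sum_x (\sum_y xf y u * NKf a K y x) * xf x w = 0) ->
  sr a setT = (sr a K + sr a (~: K))%N.
Proof.
move=> hC hZ; rewrite srT !sr_mx.
have PP : Dm K *m Dm K = Dm K by rewrite Dm_mul setIid.
have RR : Dm (~: K) *m Dm (~: K) = Dm (~: K) by rewrite Dm_mul setIid.
have PR : Dm K *m Dm (~: K) = 0 by rewrite Dm_mul setICr Dm_set0.
have RP : Dm (~: K) *m Dm K = 0 by rewrite Dm_mul setIC setICr Dm_set0.
have hC' : Dm K *m mx sk *m Dm (~: K) = (Dm K *m mx sk *m Dm K) *m mx xf.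
  by rewrite !DMD mx_mul; apply: mx_ext => u w; rewrite hC.
have hZ' : (mx xf)^T *m (Dm K *m mx sk *m Dm K) *m mx xf = 0.
  by rewrite DMD mx_tr !mx_mul -mx0; apply: mx_ext => u w; rewrite hZ.
have := rank_split PP RR PR RP (Dm_add K) (Dm_tr K) (Dm_tr (~: K)) Mt hC' hZ'.
by rewrite !DMD.
Qed.

End Split.

End MPG.
Import MPG.

Module MPH.
Set Implicit Arguments. Unset Strict Implicit. Unset Printing Implicit Defensive.
Import GRing.Theory Num.Theory.
Local Open Scope ring_scope.

Section Main.
Variable T : finType.
Variable a : rel T.
Variable c : seq T.
Hypothesis ao : oriented a.
Hypothesis conn : connected_graph a.
Hypothesis ne : n_edges a = #|T|.
Hypothesis cyc : is_graph_cycle a c.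

Local Notation G := (und a).
Local Notation H := (del_cycle_edges a c).
Local Notation C := (cycle_verts c).
Local Notation sk := (Defs.skew a).
Local Notation Tv v := (rooted_tree a c v).

Lemma satG v : v \in c -> saturated H (Tv v) v <-> saturated G (Tv v) v.
Proof.
move=> vc; apply: saturated_eq => x y xT yT.
by rewrite (Tv_GH ao conn ne cyc vc xT yT).
Qed.

Lemma part1 v : v \in c -> saturated H (Tv v) v ->
  sr a setT = (sr a (Tv v) + sr a (~: Tv v))%N.
Proof.
move=> vc /(satG vc) hs.
set K := Tv v.
have vK : v \in K := Tv_in a c v.
have hlt := (@sat_nu _ G K v vK).1 hs.
have [f hf] := (tree_PQ ao (leqnn #|K|) (FP_Tv ao conn ne cyc vc) vK).1 hlt.
apply: (split_gen ao (xf := fun x w => f x * ((w \in ~: K)%:R * sk v w))).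
  move=> u w.
  rewrite (eq_bigr (fun x => ((u \in K)%:R * ((w \in ~: K)%:R * sk v w)) *
                             ((x \in K)%:R * (sk u x * f x)))); last first.
    by move=> x _; rewrite /NKf; ring.
  rewrite -mulr_sumr sum_ind.
  case: (boolP (u \in K)) => uK; last by rewrite /=; ring.
  rewrite hf //.
  case: (boolP (w \in ~: K)) => wK; last by rewrite /=; ring.
  case: (eqVneq u v) => [->|nuv]; first by rewrite /=; ring.
  rewrite skew0 /=; first by ring.
  have wK' : w \notin K by rewrite inE in wK.
  apply/negP => guw; have [e _] := Tv_cross ao conn ne cyc vc uK wK' guw.
  by move: nuv; rewrite e eqxx.
move=> u w.
set F := fun z => (z \in K)%:R * f z.
rewrite (eq_bigr (fun x => (((u \in ~: K)%:R * sk v u) * ((w \in ~: K)%:R * sk v w)) *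
                           \sum_y F y * (sk y x * F x))); last first.
  by move=> x _; rewrite mulr_suml mulr_sumr; apply: eq_bigr => y _; rewrite /NKf /F; ring.
by rewrite -mulr_sumr exchange_big /= (dsumT ao) mulr0.
Qed.


Lemma absorb u z : u \in c -> (z \in ~: C)%:R * (z \in Tv u :\ u)%:R = (z \in Tv u :\ u)%:R :> rat.
Proof.
move=> uc; case: (boolP (z \in Tv u :\ u)) => zT; last by rewrite mulr0.
case/setD1P: zT => zu zT; rewrite !inE mulr1.
case: (boolP (z \in c)) => // zc.
by move: zu; rewrite (Tv_c ao conn ne cyc uc zc zT) eqxx.
Qed.

Lemma part2 : (forall v, v \in c -> ~ saturated H (Tv v) v) ->
  sr a setT = (sr a C + sr a (~: C))%N.
Proof.
move=> hns.
have hg : forall w, exists gw : T -> rat, w \in c -> forall u, u \in Tv w :\ w ->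
    \sum_(x in Tv w :\ w) sk u x * gw x = sk u w.
  move=> w; case: (boolP (w \in c)) => wc; last by exists (fun _ => 0).
  have wK : w \in Tv w := Tv_in a c w.
  have hle : (nu G (Tv w) <= nu G (Tv w :\ w))%N.
    by rewrite leqNgt; apply/negP => /(@sat_nu _ G _ w wK) /(satG wc); apply: hns.
  have [gw hgw] := (tree_PQ ao (leqnn #|Tv w|) (FP_Tv ao conn ne cyc wc) wK).2 hle.
  by exists gw.
have [g hg'] := fin_all_exists hg.
rewrite addnC -{2}(setCK C).
apply: (split_gen ao (xf := fun x w => (w \in C)%:R * ((x \in Tv w :\ w)%:R * g w x))).
  move=> u w; rewrite setCK.
  case: (boolP (w \in C)) => wC; last first.
    by rewrite big1 /= ?mulr0 // => x _; rewrite /= !mul0r mulr0.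
  have wc : w \in c by rewrite inE in wC.
  rewrite (eq_bigr (fun x => (u \in ~: C)%:R * ((x \in Tv w :\ w)%:R * (sk u x * g w x)))); last first.
    move=> x _; rewrite /NKf /=.
    transitivity ((u \in ~: C)%:R * (((x \in ~: C)%:R * (x \in Tv w :\ w)%:R) * (sk u x * g w x)));
      first by ring.
    by rewrite absorb.
  rewrite -mulr_sumr sum_ind.
  case: (boolP (u \in ~: C)) => uC; last by rewrite /=; ring.
  have uc : u \notin c by rewrite !inE in uC.
  rewrite /= mul1r mulr1.
  rewrite mul1r; case: (boolP (u \in Tv w :\ w)) => uT; first by rewrite hg'.
  have uT' : u \notin Tv w.
    apply: contra uT => h; apply/setD1P; split=> //.
    by apply: contraNneq uc => ->.
  rewrite big1; last first.
    move=> x /setD1P[xw xT]; rewrite skew0 ?mul0r //; apply/negP => gux.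
    have gxu : G x u by rewrite Gsym.
    have [e _] := Tv_cross ao conn ne cyc wc xT uT' gxu.
    by move: xw; rewrite e eqxx.
  apply: skew0; apply/negP => guw.
  have gwu : G w u by rewrite Gsym.
  have [_ h] := Tv_cross ao conn ne cyc wc (Tv_in a c w) uT' gwu.
  by move: uc; rewrite h.
move=> u w.
case: (boolP (u \in C)) => uC; last first.
  by rewrite big1 // => x _; rewrite big1 ?mul0r // => y _; rewrite /= !mul0r.
case: (boolP (w \in C)) => wC; last first.
  by rewrite big1 // => x _; rewrite /= !mul0r mulr0.
have uc : u \in c by rewrite inE in uC.
have wc : w \in c by rewrite inE in wC.
set Fu := fun z => (z \in Tv u :\ u)%:R * g u z.
set Fw := fun z => (z \in Tv w :\ w)%:R * g w z.
rewrite (eq_bigr (fun x => \sum_y Fu y * (sk y x * Fw x))); last first.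
  move=> x _; rewrite mulr_suml; apply: eq_bigr => y _.
  rewrite /NKf /Fu /Fw /=.
  have e1 := absorb y uc; have e2 := absorb x wc.
  transitivity (((y \in ~: C)%:R * (y \in Tv u :\ u)%:R) * g u y * sk y x *
                ((x \in ~: C)%:R * (x \in Tv w :\ w)%:R) * g w x); first by ring.
  by rewrite e1 e2; ring.
case: (eqVneq u w) => [e|nuw].
  rewrite exchange_big /=; have := dsumT ao Fu; rewrite /Fw /Fu -e; exact.
apply: big1 => x _; apply: big1 => y _; rewrite /Fu /Fw.
case: (boolP (y \in Tv u :\ u)) => yT; last by rewrite /=; ring.
case: (boolP (x \in Tv w :\ w)) => xT; last by rewrite /=; ring.
case/setD1P: yT => yu yT; case/setD1P: xT => xw xT.
have xT' : x \notin Tv u by apply: (Tv_disj ao conn ne cyc wc uc _ xT); rewrite eq_sym.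
rewrite skew0 /=; first by ring.
apply/negP => gyx; have [e _] := Tv_cross ao conn ne cyc uc yT xT' gyx.
by move: yu; rewrite e eqxx.
Qed.

Theorem main_thm :
  (forall v, v \in c ->
     saturated (del_cycle_edges a c) (rooted_tree a c v) v ->
     sr a [set: T] = (sr a (rooted_tree a c v) + sr a (~: rooted_tree a c v))%N) /\
  ((forall v, v \in c -> ~ saturated (del_cycle_edges a c) (rooted_tree a c v) v) ->
     sr a [set: T] = (sr a (cycle_verts c) + sr a (~: cycle_verts c))%N).
Proof. by split; [exact: part1 | exact: part2]. Qed.

End Main.

End MPH.
Import MPH.

Unset Implicit Arguments.

Theorem theorem4p5 (T : finType) (a : rel T) (c : seq T) :
  oriented a -> connected_graph a -> n_edges a = #|T| ->
  is_graph_cycle a c ->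
  (forall v, v \in c ->
     saturated (del_cycle_edges a c) (rooted_tree a c v) v ->
     sr a [set: T] = (sr a (rooted_tree a c v) + sr a (~: rooted_tree a c v))%N) /\
  ((forall v, v \in c -> ~ saturated (del_cycle_edges a c) (rooted_tree a c v) v) ->
     sr a [set: T] = (sr a (cycle_verts c) + sr a (~: cycle_verts c))%N).
Proof.
move=> ao conn ne cyc.
exact: (main_thm ao conn ne cyc).
Qed.
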